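(* Let $f:\mathbb{N}\to\mathbb{N}\cup\{\infty\}$ be any function, and let $\mathbf{P}_f$ be the set of integer partitions in which, for every $i$, the part $i$ appears at most $f(i)$ times. Then $\mathbf{P}_f$ is a distributive sublattice of the Young lattice; that is, $\mathbf{P}_f$ is closed under the partwise join and meet of the Young lattice.
   Context: $\mathbb{N}$ denotes the positive integers. The Young lattice is the set of all integer partitions (including the empty one) ordered by $\lambda\le\mu$ iff $\lambda_i\le\mu_i$ for all $i$ (parts beyond the length being $0$); its join and meet are given partwise by $(\lambda\vee\mu)_i=\max(\lambda_i,\mu_i)$ and $(\lambda\wedge\mu)_i=\min(\lambda_i,\mu_i)$. *)

(* Defs.v *)
From mathcomp Require Import all_boot.
Set Implicit Arguments. Unset Strict Implicit. Unset Printing Implicit Defensive.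

Definition is_partition (l : seq nat) : bool :=
  sorted geq l && all (fun x => 0 < x) l.

Definition part (l : seq nat) (i : nat) : nat := nth 0 l i.

Definition yjoin (l m : seq nat) : seq nat :=
  mkseq (fun i => maxn (part l i) (part m i)) (maxn (size l) (size m)).
Definition ymeet (l m : seq nat) : seq nat :=
  mkseq (fun i => minn (part l i) (part m i)) (minn (size l) (size m)).

(* f : N -> N u {oo}, with None standing for oo (the value at 0 is irrelevant). *)
Definition mult_ok (f : nat -> option nat) (l : seq nat) : Prop :=
  forall i, 0 < i ->
    match f i with Some k => count_mem i l <= k | None => true end.

Definition in_Pf (f : nat -> option nat) (l : seq nat) : Prop :=
  is_partition l /\ mult_ok f l.

(* Main.v *)
Require Import Defs.
From mathcomp Require Import all_boot.
From mathcomp Require Import zify.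

Lemma part_sorted l : sorted geq l -> forall i, part l i.+1 <= part l i.
Proof.
move=> /(sortedP 0) H i; rewrite /part.
case: (ltnP i.+1 (size l)) => hi; first exact: H.
by rewrite (nth_default 0 hi).
Qed.

Lemma sorted_of_part t : (forall i, part t i.+1 <= part t i) -> sorted geq t.
Proof. by move=> H; apply/(sortedP 0) => i _; apply: H. Qed.

Lemma cnt_ge l v : sorted geq l -> 0 < v ->
  forall k, (k < count (fun x => v <= x) l) = (v <= part l k).
Proof.
elim: l => [|x l IH] /= Hs Hv k.
  by rewrite /part nth_nil; case: v Hv.
have Hl : sorted geq l by move: Hs; case: l {IH} => //= y l /andP[].
have Hall : all (fun y => y <= x) l.
  have := @order_path_min _ geq x l; rewrite /=.
  apply => //; move=> a b c /= h1 h2; exact: leq_trans h2 h1.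
case: (leqP v x) => hvx /=.
  case: k => [|k] //=; rewrite add1n ltnS; exact: IH.
have -> : count (fun x => v <= x) l = 0.
  apply/eqP; rewrite -leqn0 leqNgt -has_count; apply/hasPn => y hy.
  by move/allP: Hall => /(_ y hy) hyx; rewrite -ltnNge; apply: leq_ltn_trans hvx.
case: k => [|k] /=; first by rewrite /part /=; apply/esym/negbTE; rewrite -ltnNge.
idtac.
rewrite /part /=; apply/esym/negbTE; rewrite -ltnNge.
case: (ltnP k (size l)) => hk.
  by apply: leq_ltn_trans hvx; move/all_nthP: Hall; apply.
by rewrite nth_default.
Qed.

Lemma eq_lt x y : (forall k, (k < x) = (k < y)) -> x = y.
Proof.
move=> H; apply/eqP; rewrite eqn_leq.
have h1 := H y; have h2 := H x; rewrite ltnn in h1 h2.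
by rewrite ltnn in h2; case: (ltngtP x y) h1 h2.
Qed.

Lemma cnt_split v s :
  count_mem v s = count (fun x => v <= x) s - count (fun x => v.+1 <= x) s.
Proof.
suff : count (fun x => v <= x) s = count_mem v s + count (fun x => v.+1 <= x) s
  by move=> ->; rewrite addnK.
elim: s => //= x s ->; rewrite addnACA; congr (_ + _).
by case: (ltngtP v x) => h; rewrite ?h //= ?h.
Qed.

Lemma part_join l m k : part (yjoin l m) k = maxn (part l k) (part m k).
Proof.
rewrite /yjoin /part; case: (ltnP k (maxn (size l) (size m))) => hk.
  by rewrite nth_mkseq.
rewrite nth_default ?size_mkseq // !nth_default //.
  by apply: leq_trans (leq_maxr _ _) hk.
by apply: leq_trans (leq_maxl _ _) hk.
Qed.

Lemma part_meet l m k : part (ymeet l m) k = minn (part l k) (part m k).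
Proof.
rewrite /ymeet /part; case: (ltnP k (minn (size l) (size m))) => hk.
  by rewrite nth_mkseq.
rewrite nth_default ?size_mkseq //.
move: hk; rewrite geq_min => /orP[] hk; rewrite (nth_default 0 hk) //.
by rewrite minnC.
Qed.

Lemma pos_part l i : is_partition l -> i < size l -> 0 < part l i.
Proof. by case/andP=> _ /(all_nthP 0) H; apply: H. Qed.

Theorem mainTheorem4 (f : nat -> option nat) (l m : seq nat) :
  in_Pf f l -> in_Pf f m -> in_Pf f (yjoin l m) /\ in_Pf f (ymeet l m).
Proof.
move=> [Pl Ml] [Pm Mm].
have Sl : sorted geq l by case/andP: Pl.
have Sm : sorted geq m by case/andP: Pm.
have SJ : sorted geq (yjoin l m).
  apply: sorted_of_part => i; rewrite !part_join.
  by rewrite geq_max !leq_max !part_sorted ?orbT.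
have SM : sorted geq (ymeet l m).
  apply: sorted_of_part => i; rewrite !part_meet.
  by rewrite leq_min !geq_min !part_sorted ?orbT.
have cJ : forall v, 0 < v -> count (fun x => v <= x) (yjoin l m) =
    maxn (count (fun x => v <= x) l) (count (fun x => v <= x) m).
  move=> v hv; apply: eq_lt => k.
  by rewrite cnt_ge // leq_max !cnt_ge // part_join leq_max.
have cM : forall v, 0 < v -> count (fun x => v <= x) (ymeet l m) =
    minn (count (fun x => v <= x) l) (count (fun x => v <= x) m).
  move=> v hv; apply: eq_lt => k.
  by rewrite cnt_ge // leq_min !cnt_ge // part_meet leq_min.
have sub : forall v s, count (fun x => v.+1 <= x) s <= count (fun x => v <= x) s.
  by move=> v s; apply: sub_count => x /ltnW.
split; split.
- rewrite /is_partition SJ /=; apply/(all_nthP 0) => i.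
  rewrite size_mkseq => hi; rewrite -/(part _ i) part_join.
  rewrite leq_max; move: hi; rewrite leq_max => /orP[] hi.
    by rewrite pos_part.
  by rewrite (pos_part _ _ Pm hi) orbT.
- move=> v hv; have := Ml v hv; have := Mm v hv.
  case: (f v) => // k; rewrite !cnt_split cJ // cJ //.
  have := sub v l; have := sub v m. lia.
- rewrite /is_partition SM /=; apply/(all_nthP 0) => i.
  rewrite size_mkseq => hi; rewrite -/(part _ i) part_meet.
  rewrite leq_min; move: hi; rewrite leq_min => /andP[h1 h2].
  by rewrite (pos_part _ _ Pl h1) (pos_part _ _ Pm h2).
- move=> v hv; have := Ml v hv; have := Mm v hv.
  case: (f v) => // k; rewrite !cnt_split cM // cM //.
  have := sub v l; have := sub v m. lia.
Qed.
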